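(* Let $\mathcal{X}=\{A\in\mathcal{M}_d: A=A^\dagger,\ \operatorname{tr}A=0\}$ with the basis consisting of $\sigma_x^{jk}=|j\rangle\langle k|+|k\rangle\langle j|$ and $\sigma_y^{jk}=-i(|j\rangle\langle k|-|k\rangle\langle j|)$ for $1\le j<k\le d$, and $\sigma_z^j=|j\rangle\langle j|-|j+1\rangle\langle j+1|$ for $j=1,\dots,d-1$, and let $\mathcal{V}=\{A\mapsto UAU^\dagger: U\in\mathcal{M}_d\text{ unitary}\}$. Then for every pair $B_1,B_2$ of these basis vectors there is $T\in\mathcal{V}$ with $T(B_1)=B_2$.
   Context: $\{|1\rangle,\dots,|d\rangle\}$ is the standard basis of $\mathbb{C}^d$. *)

(* Defs.v *)
From HB Require Import structures.
From mathcomp Require Import all_boot all_order all_algebra.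
From mathcomp Require Import sesquilinear spectral.
Set Implicit Arguments. Unset Strict Implicit. Unset Printing Implicit Defensive.
Import GRing.Theory Num.Theory.
Local Open Scope ring_scope.

(* Indices 1..d of the paper are 0..d-1 here ('I_d); |j><k| = delta_mx j k. *)
Section Basis.
Variables (C : numClosedFieldType) (d : nat).

Definition sigma_x (j k : 'I_d) : 'M[C]_d := delta_mx j k + delta_mx k j.
Definition sigma_y (j k : 'I_d) : 'M[C]_d :=
  (- 'i) *: (delta_mx j k - delta_mx k j).
(* sigma_z^j = |j><j| - |j+1><j+1|, with k the index j+1 *)
Definition sigma_z (j k : 'I_d) : 'M[C]_d := delta_mx j j - delta_mx k k.

Definition is_pauli_basis (B : 'M[C]_d) : Prop :=
  (exists j k : 'I_d, (j < k)%N /\ B = sigma_x j k) \/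
  (exists j k : 'I_d, (j < k)%N /\ B = sigma_y j k) \/
  (exists j k : 'I_d, val k = (val j).+1 /\ B = sigma_z j k).
End Basis.

(* Main.v *)
Require Import Defs.
From HB Require Import structures.
From mathcomp Require Import all_boot all_order all_algebra.
From mathcomp Require Import sesquilinear spectral fingroup perm.
From mathcomp Require Import ring.
Import GRing.Theory Num.Theory.
Local Open Scope ring_scope.
Local Open Scope sesquilinear_scope.

Lemma conj_delta (C : numClosedFieldType) n (U : 'M[C]_n) j k i l :
  (U *m delta_mx j k *m U^t*) i l = U i j * (U l k)^*.
Proof.
rewrite !mxE (bigD1 k) //= big1 ?addr0; last first.
  move=> b /negbTE nb; rewrite mxE big1 ?mul0r // => a _.
  by rewrite mxE nb andbF mulr0.
rewrite !mxE (bigD1 j) //= big1 ?addr0; last first.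
  by move=> a /negbTE na; rewrite mxE na mulr0.
by rewrite mxE !eqxx mulr1.
Qed.

Lemma sum2 {C : numClosedFieldType} {n} (j k : 'I_n) (F : 'I_n -> C) :
  j != k -> (forall a, a != j -> a != k -> F a = 0) -> \sum_a F a = F j + F k.
Proof.
move=> njk H; rewrite (bigD1 j) //= (bigD1 k) /=; last by rewrite eq_sym.
rewrite big1 ?addr0 // => a /andP[ak aj]; exact: H.
Qed.

Lemma sum1 {C : numClosedFieldType} {n} (j : 'I_n) (F : 'I_n -> C) :
  (forall a, a != j -> F a = 0) -> \sum_a F a = F j.
Proof. by move=> H; rewrite (bigD1 j) //= big1 ?addr0. Qed.

Lemma perm_unitary (C : numClosedFieldType) n (s : {perm 'I_n}) :
  perm_mx s \is @unitarymx C n n.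
Proof.
apply/unitarymxP.
have -> : (perm_mx s : 'M[C]_n)^t* = perm_mx (s^-1)%g.
  rewrite -tr_perm_mx; apply/matrixP => i j.
  by rewrite !mxE; case: (_ == _); rewrite ?conjC0 ?conjC1.
by rewrite -perm_mxM mulgV perm_mx1.
Qed.

Lemma conj_perm_delta (C : numClosedFieldType) n (s : {perm 'I_n}) j k :
  perm_mx s *m delta_mx j k *m (perm_mx s)^t* = delta_mx ((s^-1)%g j) ((s^-1)%g k) :> 'M[C]_n.
Proof.
apply/matrixP => i l; rewrite conj_delta !mxE.
have E : forall a b, (s a == b) = (a == (s^-1)%g b).
  by move=> a b; apply/eqP/eqP => [<-|->]; rewrite ?permK ?permKV.
rewrite !E; case: (i == _); case: (l == _); by rewrite ?conjC0 ?conjC1 ?mulr0 ?mulr1.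
Qed.
Definition ueq {C : numClosedFieldType} {n} (A B : 'M[C]_n) :=
  exists U : 'M[C]_n, U \is unitarymx /\ U *m A *m U^t* = B.

Lemma ueq_refl {C : numClosedFieldType} {n} (A : 'M[C]_n) : ueq A A.
Proof.
have H1 : (1%:M : 'M[C]_n)^t* = 1%:M.
  apply/matrixP => i j; rewrite !mxE eq_sym; case: (_ == _); by rewrite ?conjC1 ?conjC0.
exists 1%:M; split. apply/unitarymxP; rewrite H1. exact: mul1mx. rewrite H1 -[RHS](mul1mx A). exact: mulmx1. Qed.

Lemma ueq_sym {C : numClosedFieldType} {n} (A B : 'M[C]_n) : ueq A B -> ueq B A.
Proof.
move=> [U [HU <-]]; exists (U^t*); split; first by rewrite trmxC_unitary.
by rewrite trmxCK !mulmxA (mulmxKtV _ HU) // -(invmx_unitary HU) mulVmx ?unitarymx_unit // mul1mx.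
Qed.

Lemma ueq_trans {C : numClosedFieldType} {n} {A B D : 'M[C]_n} : ueq A B -> ueq B D -> ueq A D.
Proof.
move=> [U [HU <-]] [V [HV <-]]; exists (V *m U); split; first exact: mul_unitarymx.
by rewrite trmx_mul map_mxM !mulmxA.
Qed.

Lemma ueq_perm_x {C : numClosedFieldType} {n} (s : {perm 'I_n}) j k :
  ueq (sigma_x C j k) (sigma_x C ((s^-1)%g j) ((s^-1)%g k)).
Proof.
exists (perm_mx s); split; first exact: perm_unitary.
by rewrite /sigma_x mulmxDr mulmxDl !conj_perm_delta.
Qed.

Lemma ueq_x01 {C : numClosedFieldType} {n} (j k o0 o1 : 'I_n) :
  j != k -> o0 != o1 -> ueq (sigma_x C j k) (sigma_x C o0 o1).
Proof.
move=> njk no.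
apply: ueq_trans (ueq_perm_x (tperm j o0) j k) _.
rewrite tpermV tpermL.
set k1 := tperm j o0 k.
have nk1 : o0 != k1.
  rewrite /k1 -{1}(tpermL j o0) (inj_eq (perm_inj (s:=tperm j o0))) //.
apply: ueq_trans (ueq_perm_x (tperm k1 o1) o0 k1) _.
by rewrite tpermV tpermL tpermD 1?eq_sym //; apply: ueq_refl.
Qed.

Ltac cs x j k := case: (eqVneq x j) => [?|/negbTE ?]; [subst x|case: (eqVneq x k) => [?|/negbTE ?]; [subst x|]].
Ltac rwhyps := repeat match goal with H : (_ == _) = false |- _ => rewrite H end.

Lemma ueq_y (C : numClosedFieldType) n (j k : 'I_n) :
  j != k -> ueq (sigma_x C j k) (sigma_y C j k).
Proof.
move=> njk; have njk' := negbTE njk; have nkj : (k == j) = false by rewrite eq_sym.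
pose D : 'M[C]_n := \matrix_(a, b) (if a == b then (if a == j then - 'i else 1) else 0).
have Ci : (- 'i : C) * (- 'i)^* = 1.
  by rewrite rmorphN /= conjCi opprK mulNr -expr2 sqrCi opprK.
exists D; split.
  apply/unitarymxP/matrixP => i l; rewrite !mxE (sum1 i).
    rewrite !mxE eqxx; case: (eqVneq l i) => [->|/negbTE nli].
      by case: (i == j); rewrite ?conjC1 ?mulr1 ?Ci.
    by rewrite conjC0 mulr0.
  by move=> a /negbTE nai; rewrite !mxE eq_sym nai mul0r.
apply/matrixP => i l.
rewrite /sigma_x mulmxDr mulmxDl mxE !conj_delta /sigma_y !mxE.
cs i j k; cs l j k; rewrite ?eqxx ?njk' ?nkj /=; rwhyps;
  rewrite ?conjC0 ?conjC1 ?mulr0 ?mul0r ?mul1r ?mulr1 ?addr0 ?add0r ?subr0 ?sub0r //.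
all: rewrite ?oppr0 ?mulr0 ?mulr1 ?mulrN1 //.
by rewrite rmorphN /= conjCi.
Qed.

Lemma ueq_z (C : numClosedFieldType) n (j k : 'I_n) :
  j != k -> ueq (sigma_x C j k) (sigma_z C j k).
Proof.
move=> njk; have njk' := negbTE njk; have nkj : (k == j) = false by rewrite eq_sym.
pose w : C := (1 + 'i) / 2.
have h2 : (2 : C) != 0 by rewrite pnatr_eq0.
have hw : w * w^* = 2^-1.
  have -> : w^* = (1 - 'i) / 2.
    by rewrite /w rmorphM /= fmorphV /= rmorphD /= rmorph1 conjCi rmorph_nat.
  have e : (1 + 'i) * (1 - 'i) = 2 :> C.
    by rewrite mulrDl mul1r mulrBr mulr1 -expr2 sqrCi subrKA opprK.
  rewrite /w; transitivity (((1 + 'i) * (1 - 'i)) / (2 * 2) : C); first by field.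
  by rewrite e; field.
have hh : (2^-1 + 2^-1 : C) = 1 by field.
pose W : 'M[C]_n := \matrix_(a, b) (if a == j then (if (b == j) || (b == k) then w else 0)
   else if a == k then (if b == j then w else if b == k then - w else 0)
   else if a == b then 1 else 0).
exists W; split.
  apply/unitarymxP/matrixP => i l; rewrite !mxE.
  case: (eqVneq i j) => [?|/negbTE nij]; [subst i|case: (eqVneq i k) => [?|/negbTE nik]; [subst i|]].
  - rewrite (@sum2 _ _ j k _ njk); last first.
      by move=> a /negbTE aj /negbTE ak; rewrite !mxE eqxx aj ak mul0r.
    rewrite !mxE !eqxx /= ?njk' ?nkj /=.
    cs l j k; rewrite ?eqxx ?njk' ?nkj /=; rwhyps; rewrite /= ?conjC0 ?mulr0 ?addr0 //.
    + by rewrite hw hh.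
    + by rewrite rmorphN /= mulrN hw subrr.
  - rewrite (@sum2 _ _ j k _ njk); last first.
      by move=> a /negbTE aj /negbTE ak; rewrite !mxE nkj eqxx aj ak mul0r.
    rewrite !mxE !eqxx /= ?njk' ?nkj /=.
    cs l j k; rewrite ?eqxx ?njk' ?nkj /=; rwhyps; rewrite /= ?conjC0 ?mulr0 ?addr0 //.
    + by rewrite mulNr hw subrr.
    + by rewrite rmorphN /= mulrN mulNr opprK hw hh.
  - rewrite (sum1 i); last first.
      by move=> a /negbTE ai; rewrite !mxE nij nik eq_sym ai mul0r.
    rewrite !mxE nij nik eqxx mul1r.
    case: (eqVneq l i) => [?|/negbTE nli]; [subst l|].
      by rewrite nij nik conjC1.
    by case: (l == j); case: (l == k); rewrite /= conjC0.
  apply/matrixP => i l.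
  rewrite /sigma_x mulmxDr mulmxDl mxE !conj_delta /sigma_z !mxE.
  cs i j k; cs l j k; rewrite ?eqxx ?njk' ?nkj /=; rwhyps;
  rewrite /= ?conjC0 ?conjC1 ?mulr0 ?mul0r ?mul1r ?mulr1 ?addr0 ?add0r ?subr0 ?sub0r ?oppr0 //.
  all: rewrite ?rmorphN /= ?mulrN ?mulNr hw ?subrr ?addNr ?hh //.
  by rewrite -opprD hh.
Qed.

Lemma to_x (C : numClosedFieldType) d (B : 'M[C]_d) :
  is_pauli_basis B -> exists j k : 'I_d, j != k /\ ueq B (sigma_x C j k).
Proof.
case=> [[j [k [jk ->]]]|[[j [k [jk ->]]]|[j [k [jk ->]]]]].
- have njk : j != k by apply/negbT; exact: ltn_eqF.
  by exists j, k; split => //; apply: ueq_refl.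
- have njk : j != k by apply/negbT; exact: ltn_eqF.
  by exists j, k; split => //; apply: ueq_sym; apply: ueq_y.
- have njk : j != k.
    by apply/eqP => e; move: jk; rewrite e => /eqP; rewrite eqn_leq ltnn andbF.
  by exists j, k; split => //; apply: ueq_sym; apply: ueq_z.
Qed.

Theorem lemma2 (C : numClosedFieldType) (d : nat) (B1 B2 : 'M[C]_d) :
  is_pauli_basis B1 -> is_pauli_basis B2 ->
  exists U : 'M[C]_d, U \is unitarymx /\ U *m B1 *m U ^t* = B2.
Proof.
move=> /to_x [j1 [k1 [n1 h1]]] /to_x [j2 [k2 [n2 h2]]].
exact: (ueq_trans h1 (ueq_trans (ueq_x01 _ _ _ _ n1 n2) (ueq_sym _ _ h2))).
Qed.
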